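(* Let $X$ be a real Banach space with $\dim X\ge 2$ and let $\alpha,\beta>0$. Then $$\alpha+\beta\le DW_B(X,\alpha,\beta)\le\max\{2\alpha+\beta,\ \alpha+2\beta\}.$$
   Context: For $x,y\in X$, $x$ is Birkhoff orthogonal to $y$, written $x\perp_B y$, if $\|x+\lambda y\|\ge\|x\|$ for all $\lambda\in\mathbb R$. For $\alpha,\beta>0$, $$DW_B(X,\alpha,\beta)=\sup\left\{\frac{\alpha\|x\|+\beta\|y\|}{\|x-y\|}\left\|\frac{x}{\|x\|}-\frac{y}{\|y\|}\right\|: x,y\in X\setminus\{0\},\ x\perp_B y\right\}.$$ *)

(* Defs.v *)
From HB Require Import structures.
From mathcomp Require Import all_boot all_order all_algebra.
From mathcomp Require Import all_classical all_reals all_analysis.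
Set Implicit Arguments. Unset Strict Implicit. Unset Printing Implicit Defensive.
Import Order.TTheory GRing.Theory Num.Theory.
Import numFieldNormedType.Exports.
Local Open Scope classical_set_scope.
Local Open Scope ring_scope.

Definition birkhoff_orth (R : realType) (X : normedModType R) (x y : X) : Prop :=
  forall l : R, `|x| <= `|x + l *: y|.

Definition DW_B_set (R : realType) (X : normedModType R) (a b : R) : set R :=
  [set t | exists x y : X, [/\ x != 0, y != 0, birkhoff_orth x y &
      t = (a * `|x| + b * `|y|) / `|x - y| * `| (`|x|^-1 *: x) - (`|y|^-1 *: y) |] ].

(* DW_B(X, α, β) as a supremum in the extended reals (it may a priori be +oo). *)
Definition DW_B (R : realType) (X : normedModType R) (a b : R) : \bar R :=
  ereal_sup [set t%:E | t in DW_B_set X a b].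

Definition dim_ge2 (R : realType) (X : normedModType R) : Prop :=
  exists x y : X, forall a b : R, a *: x + b *: y = 0 -> a = 0 /\ b = 0.

(* Main.v *)
Set Warnings "-all".
Require Import Defs.
From HB Require Import structures.
From mathcomp Require Import all_boot all_order all_algebra.
From mathcomp Require Import all_classical all_reals all_analysis.
From mathcomp Require Import ring lra.
Import Order.TTheory GRing.Theory Num.Theory.
Import numFieldNormedType.Exports.
Local Open Scope ring_scope.

Lemma arith (R : realType) (a b nx ny d e : R) : 0 < a -> 0 < b -> 0 < nx -> 0 < ny ->
  nx <= d -> ny - nx <= d -> 0 <= e ->
  e * nx <= d + `|nx - ny| -> e * ny <= d + `|nx - ny| ->
  (a * nx + b * ny) / d * e <= Num.max (2 * a + b) (a + 2 * b).
Proof.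
move=> a0 b0 x0 y0 hd1 hd2 e0 h1 h2.
have d0 : 0 < d by exact: (lt_le_trans x0 hd1).
rewrite mulrAC ler_pdivrMr //.
have P : 0 < a * nx + b * ny by nra.
case: (lerP ny nx) => hxy.
- rewrite ger0_norm ?subr_ge0 // in h1.
  apply: le_trans (_ : (2 * a + b) * d <= _); last first.
    by apply: ler_pM => //; [lra|exact: ltW|rewrite le_max lexx].
  have : (a * nx + b * ny) * (e * nx) <= (a * nx + b * ny) * (d + (nx - ny)).
    by apply: ler_wpM2l => //; exact: ltW.
  have K : (a * nx + b * ny) * (d + (nx - ny)) <= (2 * a + b) * d * nx.
    have h4 : 0 <= b * ((nx - ny) * (nx - ny)) by apply: mulr_ge0; nra.
    have h5 : 0 < a * (nx * ny) by apply: mulr_gt0 => //; exact: mulr_gt0.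
    have : (a*nx+b*ny)*(2*nx - ny) <= (2*a+b)*nx*nx by nra.
    have h6 : 0 <= (d - nx) * ((2*a+b)*nx - (a * nx + b * ny)) by apply: mulr_ge0; nra.
    nra.
  move=> H; rewrite -(ler_pM2r x0); nra.
- rewrite ltr0_norm ?subr_lt0 // opprB in h2.
  apply: le_trans (_ : (a + 2 * b) * d <= _); last first.
    by apply: ler_pM => //; [lra|exact: ltW|rewrite le_max lexx orbT].
  have : (a * nx + b * ny) * (e * ny) <= (a * nx + b * ny) * (d + (ny - nx)).
    by apply: ler_wpM2l => //; exact: ltW.
  have K : (a * nx + b * ny) * (d + (ny - nx)) <= (a + 2 * b) * d * ny.
    case: (lerP ny (2 * nx)) => h3.
    + have : nx * (d + (ny - nx)) <= d * ny by nra.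
      have h7 : 0 <= (b * ny) * (2 * nx - ny) by apply: mulr_ge0; nra.
      have : (a * nx + b * ny) * ny <= (a + 2 * b) * ny * nx by nra.
      move=> B A. rewrite -(ler_pM2l x0).
      have A' : (a * nx + b * ny) * (nx * (d + (ny - nx))) <= (a * nx + b * ny) * (d * ny).
        by apply: ler_wpM2l => //; exact: ltW.
      have B' : ((a * nx + b * ny) * ny) * d <= ((a + 2 * b) * ny * nx) * d.
        by apply: ler_wpM2r => //; exact: ltW.
      nra.
    + have h8 : 0 <= (a * nx + b * ny) * (d - (ny - nx)) by apply: mulr_ge0; nra.
      have h9 : 0 <= d * (ny - 2 * nx) by apply: mulr_ge0; nra.
      nra.
  move=> H; rewrite -(ler_pM2r y0); nra.
Qed.

Lemma key (R : realType) (X : normedModType R) (p q : X) : p != 0 -> q != 0 ->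
  `| `|p|^-1 *: p - `|q|^-1 *: q| * `|p| <= `|p - q| + `| `|p| - `|q| |.
Proof.
move=> p0 q0.
have np : 0 < `|p| by rewrite normr_gt0.
have nq : 0 < `|q| by rewrite normr_gt0.
have -> : `|p|^-1 *: p - `|q|^-1 *: q = `|p|^-1 *: (p - q) + (`|p|^-1 - `|q|^-1) *: q.
  by rewrite scalerBr scalerBl addrA subrK.
have E : `|p| - `|q| = - ((`|p|^-1 - `|q|^-1) * (`|q| * `|p|)).
  field; apply/andP; split; exact: lt0r_neq0.
rewrite E normrN normrM (gtr0_norm (mulr_gt0 nq np)).
apply: le_trans (_ : (`| `|p|^-1 *: (p - q)| + `|(`|p|^-1 - `|q|^-1) *: q|) * `|p| <= _).
  apply: ler_wpM2r; [exact: ltW | exact: ler_normD].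
rewrite !normrZ mulrDl normrV ?unitfE ?lt0r_neq0 // normr_id.
by rewrite (mulrAC (`|p|^-1)) mulVf ?lt0r_neq0 // mul1r -mulrA.
Qed.

Lemma upper (R : realType) (X : normedModType R) (a b : R) (x y : X) :
  0 < a -> 0 < b -> x != 0 -> y != 0 -> birkhoff_orth x y ->
  (a * `|x| + b * `|y|) / `|x - y| * `| (`|x|^-1 *: x) - (`|y|^-1 *: y) |
   <= Num.max (2 * a + b) (a + 2 * b).
Proof.
move=> a0 b0 x0 y0 o.
have nx : 0 < `|x| by rewrite normr_gt0.
have ny : 0 < `|y| by rewrite normr_gt0.
have h1 : `|x| <= `|x - y| by have := o (-1); rewrite scaleN1r.
have h2 : `|y| - `|x| <= `|x - y|.
  rewrite lerBlDr distrC; have := ler_normD (y - x) x; rewrite subrK; lra.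
have k1 := @key _ _ x y x0 y0.
have k2 := @key _ _ y x y0 x0.
rewrite (distrC y) (distrC `|y|) -normrN opprB in k2.
apply: arith => //.
Qed.

Lemma cont_aff (R : realType) (X : normedModType R) (u v : X) :
  continuous (fun l : R => `|u + l *: v|).
Proof.
move=> l.
apply: (continuous_comp (f:=fun l : R => u + l *: v)); last exact: norm_continuous.
apply: continuousD; first exact: cst_continuous.
apply: continuousZl. exact: cvg_id.
Qed.

Lemma exists_orth (R : realType) (X : normedModType R) : dim_ge2 X ->
  exists x y : X, [/\ x != 0, y != 0 & birkhoff_orth x y].
Proof.
move=> [u [v ind]].
have u0 : u != 0.
  apply/eqP => u0; have := ind 1 0; rewrite u0 scale0r scaler0 add0r.
  by case=> // /eqP; rewrite oner_eq0.
have v0 : v != 0.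
  apply/eqP => v0; have := ind 0 1; rewrite v0 scale0r scaler0 add0r.
  by case=> // _ /eqP; rewrite oner_eq0.
have nv : 0 < `|v| by rewrite normr_gt0.
pose M := 2 * `|u| / `|v|.
have M0 : 0 <= M by rewrite /M divr_ge0 // mulr_ge0.
have MM : - M <= M by lra.
have [c cin cmin] := @EVT_min R (fun l : R => `|u + l *: v|) (- M) M MM
  (continuous_subspaceT (@cont_aff R X u v)).
have cmin' : forall t, `|u + c *: v| <= `|u + t *: v|.
  move=> t; have [tin|tout] := boolP (t \in `[- M, M]); first exact: cmin.
  have : `|u + c *: v| <= `|u + 0 *: v|.
    by apply: cmin; rewrite in_itv /=; apply/andP; split; lra.
  rewrite scale0r addr0 => H; apply: (le_trans H).
  move: tout; rewrite in_itv /= negb_and -!ltNge => tout.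
  have tM : M <= `|t|.
    case/orP: tout => h; [rewrite ltr0_norm; lra| rewrite ger0_norm; lra].
  have : `|t| * `|v| - `|u| <= `|u + t *: v|.
    rewrite -normrZ lerBlDr addrC.
    have := ler_normD (u + t *: v) (- u); rewrite normrN (addrC u) addrK; lra.
  have : M * `|v| <= `|t| * `|v| by apply: ler_wpM2r => //; exact: ltW.
  have -> : M * `|v| = 2 * `|u| by rewrite /M -mulrA mulVf ?mulr1 // lt0r_neq0.
  lra.
exists (u + c *: v), v; split => //.
  apply/eqP => h; have := ind 1 c; rewrite scale1r h.
  by case=> // /eqP; rewrite oner_eq0.
move=> l; rewrite -addrA -scalerDl; exact: cmin'.
Qed.

Lemma normalize (R : realType) (X : normedModType R) (x : X) : x != 0 ->
  `| `|x|^-1 *: x| = 1.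
Proof.
move=> x0; have nx : 0 < `|x| by rewrite normr_gt0.
by rewrite normrZ normrV ?unitfE ?lt0r_neq0 // normr_id mulVf ?lt0r_neq0.
Qed.

Theorem proposition3 (R : realType) (X : completeNormedModType R) (a b : R) :
  dim_ge2 X -> 0 < a -> 0 < b ->
  ((a + b)%:E <= DW_B X a b)%E /\
  (DW_B X a b <= (Num.max (2 * a + b) (a + 2 * b))%:E)%E.
Proof.
move=> d2 a0 b0; split.
- have [x [y [x0 y0 o]]] := @exists_orth _ _ d2.
  have nx : 0 < `|x| by rewrite normr_gt0.
  have ny : 0 < `|y| by rewrite normr_gt0.
  set x' := `|x|^-1 *: x; set y' := `|y|^-1 *: y.
  have n1 : `|x'| = 1 by exact: (@normalize R X).
  have n2 : `|y'| = 1 by exact: (@normalize R X).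
  have x'0 : x' != 0 by rewrite -normr_gt0 n1.
  have y'0 : y' != 0 by rewrite -normr_gt0 n2.
  have o' : birkhoff_orth x' y'.
    move=> l; rewrite n1.
    have -> : x' + l *: y' = `|x|^-1 *: (x + (`|x| * l / `|y|) *: y).
      rewrite scalerDr scalerA /y' scalerA; congr (_ + _ *: _).
      by field; apply/andP; split; exact: lt0r_neq0.
    rewrite normrZ normrV ?unitfE ?lt0r_neq0 // normr_id.
    rewrite -(mulVf (lt0r_neq0 nx)); apply: ler_wpM2l; last exact: o.
    by rewrite invr_ge0 ltW.
  have d1 : 1 <= `|x' - y'| by have := o' (-1); rewrite scaleN1r n1.
  apply: ereal_sup_ubound; exists (a + b) => //.
  exists x', y'; split => //.
  rewrite n1 n2 invr1 !scale1r !mulr1 divfK //.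
  by apply: lt0r_neq0; lra.
- apply: ge_ereal_sup => _ [t [x [y [x0 y0 o ->]]] <-].
  by rewrite lee_fin; apply: (@upper R X).
Qed.
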